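(* Let $\mathbf{X}\in\mathbb{R}^{n\times p}$, $\mathbf{Y}\in\mathbb{R}^n$, let $\{1,\dots,p\}$ be partitioned into disjoint groups $\mathcal{G}_1,\dots,\mathcal{G}_K$, and fix $\widetilde\lambda_{\mathrm{init}}>0$. Define $$\mathbf{M}=\Big(\tfrac{\mathbf{X}^\top\mathbf{X}}{n}+\widetilde\lambda_{\mathrm{init}}\mathbf{I}\Big)^{-1}\tfrac{\mathbf{X}^\top\mathbf{X}}{n},\qquad \mathbf{N}=\tfrac{1}{\sqrt n}\Big(\tfrac{\mathbf{X}^\top\mathbf{X}}{n}+\widetilde\lambda_{\mathrm{init}}\mathbf{I}\Big)^{-1}\mathbf{X}^\top,\qquad \widetilde{\mathbf{w}}=\Big(\tfrac{\mathbf{X}^\top\mathbf{X}}{n}+\widetilde\lambda_{\mathrm{init}}\mathbf{I}\Big)^{-1}\tfrac{\mathbf{X}^\top\mathbf{Y}}{n},$$ the $K\times K$ matrix $\mathbf{A}$ with entries $A_{gh}=\|\mathbf{M}_{\mathcal{G}_g,\mathcal{G}_h}\|_F^2/n$, and vectors $\widehat{\mathbf u},\mathbf v\in\mathbb{R}^K$ with $\widehat u_g=\|\widetilde{\mathbf w}_{\mathcal{G}_g}\|_2^2$ and $v_g=\|\mathbf N_{\mathcal G_g,\cdot}\|_F^2/n$. For $\mathbb{s}>0$ let $$\widehat{\mathbf d}(\mathbb{s})=\operatorname{argmin}_{\mathbf d\in[0,\infty)^K}\Big\|\mathbf A\mathbf d-\frac{\widehat{\mathbf u}}{\mathbb{s}^2}+\mathbf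 v\Big\|_2^2,\qquad \widehat\lambda_g(\mathbb{s})=1/\widehat d_g(\mathbb{s})\in(0,\infty]$$ (with $1/0=\infty$). Assume $\mathbf A$ is invertible and $\widehat u_g>0$ for all $g$. Then: 1. If $\mathbb{s}^2\ge\max_g\{\widehat u_g/v_g\}$, then $\widehat\lambda_g(\mathbb{s})=\infty$ for all $g$, i.e. the group ridge estimator $\widehat{\mathbf w}(\widehat{\boldsymbol\lambda}(\mathbb{s}))=0$. 2. As $\mathbb{s}\to0$, $\min_g\widehat\lambda_g(\mathbb{s})\to0$. 3. If $\mathbb{s}_1,\mathbb{s}_2>0$ satisfy $\mathcal S(\mathbb{s}_1)=\mathcal S(\mathbb{s}_2)=:\mathcal S$, where $\mathcal S(\mathbb{s})=\{g:\widehat\lambda_g(\mathbb{s})<\infty\}$, then for every $g\in\mathcal S$, $$\widehat\lambda_g(\mathbb{s}_1)=\Big\{\frac{\mathbb{s}_2^2}{\mathbb{s}_1^2}\widehat\lambda_g(\mathbb{s}_2)^{-1}+\Big(\frac{\mathbb{s}_2^2}{\mathbb{s}_1^2}-1\Big)\tilde v_{\mathcal S,g}\Big\}^{-1},\qquad \tilde v_{\mathcal S,g}=\Big((\mathbf A_{\cdot,\mathcal S}^\top\mathbf A_{\cdot,\mathcal S})^{-1}\mathbf A_{\cdot,\mathcal S}^\top\mathbf v\Big)_g .$$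
   Context: For a matrix $\mathbf B$, $\mathbf B_{\mathcal G_g,\mathcal G_h}$ denotes the submatrix with rows indexed by $\mathcal G_g$ and columns by $\mathcal G_h$, $\mathbf B_{\mathcal G_g,\cdot}$ the rows indexed by $\mathcal G_g$, and $\mathbf A_{\cdot,\mathcal S}$ the columns of $\mathbf A$ indexed by $\mathcal S$; $\mathbf w_{\mathcal G_g}=(w_j)_{j\in\mathcal G_g}$. The vector $(\mathbf A_{\cdot,\mathcal S}^\top\mathbf A_{\cdot,\mathcal S})^{-1}\mathbf A_{\cdot,\mathcal S}^\top\mathbf v$ is indexed by $\mathcal S$. For $\boldsymbol\lambda\in(0,\infty]^K$, the group ridge estimator is $\widehat{\mathbf w}(\boldsymbol\lambda)\in\operatorname{argmin}_{\mathbf w}\{\frac{1}{2n}\sum_i(Y_i-x_i^\top\mathbf w)^2+\sum_g\frac{\lambda_g}{2}\|\mathbf w_{\mathcal G_g}\|_2^2\}$, with $x_i^\top$ the rows of $\mathbf X$, where $\lambda_g=\infty$ forces $\mathbf w_{\mathcal G_g}=0$. *)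

(* Defs.v *)
From HB Require Import structures.
From mathcomp Require Import all_boot all_order all_algebra.
From mathcomp Require Import all_classical all_reals all_analysis.
Set Implicit Arguments. Unset Strict Implicit. Unset Printing Implicit Defensive.
Import Order.TTheory GRing.Theory Num.Theory.
Local Open Scope ring_scope.

Section GroupRidge.
Variables (R : realType) (n p K : nat).
Implicit Types (X : 'M[R]_(n, p)) (Y : 'cV[R]_n) (grp : 'I_p -> 'I_K).
(* The partition of {1..p} into groups G_1..G_K is encoded by grp :
   coordinate j belongs to group G_(grp j). *)

Definition gramreg X (lt : R) : 'M[R]_p :=
  (n%:R)^-1 *: (X^T *m X) + lt *: 1%:M.

Definition Mmat X lt : 'M[R]_p :=
  invmx (gramreg X lt) *m ((n%:R)^-1 *: (X^T *m X)).

Definition Nmat X lt : 'M[R]_(p, n) :=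
  (Num.sqrt (n%:R))^-1 *: (invmx (gramreg X lt) *m X^T).

Definition wtilde X Y lt : 'cV[R]_p :=
  invmx (gramreg X lt) *m ((n%:R)^-1 *: (X^T *m Y)).

Definition Amat grp X lt : 'M[R]_K :=
  \matrix_(g, h) ((\sum_(i | grp i == g) \sum_(j | grp j == h)
                     Mmat X lt i j ^+ 2) / n%:R).

Definition uvec grp X Y lt : 'cV[R]_K :=
  \col_g (\sum_(j | grp j == g) wtilde X Y lt j ord0 ^+ 2).

Definition vvec grp X lt : 'cV[R]_K :=
  \col_g ((\sum_(j | grp j == g) \sum_(i < n) Nmat X lt j i ^+ 2) / n%:R).

Definition dobj (A : 'M[R]_K) (u v : 'cV[R]_K) (s : R) (d : 'cV[R]_K) : R :=
  \sum_(g < K) ((A *m d) g ord0 - u g ord0 / s ^+ 2 + v g ord0) ^+ 2.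

Definition is_dhat (A : 'M[R]_K) (u v : 'cV[R]_K) (s : R) (d : 'cV[R]_K) : Prop :=
  (forall g, 0 <= d g ord0) /\
  (forall d' : 'cV[R]_K, (forall g, 0 <= d' g ord0) ->
       dobj A u v s d <= dobj A u v s d').

Definition lam_of (d : 'cV[R]_K) (g : 'I_K) : \bar R :=
  if d g ord0 == 0 then +oo%E else ((d g ord0)^-1)%:E.

Definition Sset (d : 'cV[R]_K) : {set 'I_K} :=
  [set g | (lam_of d g < +oo)%E].

Definition colS (A : 'M[R]_K) (S : {set 'I_K}) : 'M[R]_(K, #|S|) :=
  \matrix_(i, j) A i (enum_val j).

Definition vtS (A : 'M[R]_K) (S : {set 'I_K}) (v : 'cV[R]_K) : 'cV[R]_#|S| :=
  invmx ((colS A S)^T *m colS A S) *m ((colS A S)^T *m v).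

(* its g-th entry, for g in S (0 for g outside S, never used) *)
Definition vtilde (A : 'M[R]_K) (S : {set 'I_K}) (v : 'cV[R]_K) (g : 'I_K) : R :=
  \sum_(j < #|S|) (enum_val j == g)%:R * vtS A S v j ord0.

(* group ridge objective with penalties lambda in (0,oo]^K;
   groups with lambda_g = +oo are forced to zero. *)
Definition ridge_obj grp X Y (lam : 'I_K -> \bar R) (w : 'cV[R]_p) : R :=
  (2 * n%:R)^-1 * \sum_(i < n) (Y i ord0 - (X *m w) i ord0) ^+ 2 +
  \sum_(g < K | lam g != +oo%E) fine (lam g) / 2 *
      \sum_(j | grp j == g) w j ord0 ^+ 2.

Definition ridge_feasible grp (lam : 'I_K -> \bar R) (w : 'cV[R]_p) : Prop :=
  forall j, lam (grp j) = +oo%E -> w j ord0 = 0.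

Definition is_group_ridge grp X Y (lam : 'I_K -> \bar R) (w : 'cV[R]_p) : Prop :=
  ridge_feasible grp lam w /\
  (forall w', ridge_feasible grp lam w' ->
     ridge_obj grp X Y lam w <= ridge_obj grp X Y lam w').

End GroupRidge.

(* Main.v *)
Require Import Defs.
From HB Require Import structures.
From mathcomp Require Import all_boot all_order all_algebra.
From mathcomp Require Import all_classical all_reals all_analysis.
From mathcomp Require Import ring lra.
Import Order.TTheory GRing.Theory Num.Theory.
Import numFieldNormedType.Exports.
Local Open Scope classical_set_scope.
Local Open Scope ring_scope.



Section Aux.
Variables (R : realType) (K : nat) (A : 'M[R]_K) (u v : 'cV[R]_K).

Definition resid s (d : 'cV[R]_K) g := (A *m d) g ord0 - u g ord0 / s ^+ 2 + v g ord0.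

Lemma dobj_expand s d e t :
  dobj A u v s (d + t *: e) = dobj A u v s d
     + 2 * t * (\sum_g resid s d g * (A *m e) g ord0)
     + t ^+ 2 * \sum_g (A *m e) g ord0 ^+ 2.
Proof.
rewrite /dobj !mulr_sumr -!big_split; apply: eq_bigr => g _ /=.
rewrite mulmxDr -scalemxAr.
have -> : (A *m d + t *: (A *m e)) g ord0 = (A *m d) g ord0 + t * (A *m e) g ord0.
  by rewrite mxE [X in _ + X]mxE.
rewrite /resid; ring.
Qed.

Lemma grad_ge0 s d e (del : R) : is_dhat A u v s d -> 0 < del ->
  (forall t, 0 < t -> t <= del -> forall g, 0 <= (d + t *: e) g ord0) ->
  0 <= \sum_g resid s d g * (A *m e) g ord0.
Proof.
move=> [_ Hmin] del0 Hf.
set c := \sum_g _; set q := \sum_g (A *m e) g ord0 ^+ 2.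
have q0 : 0 <= q by apply: sumr_ge0 => g _; exact: sqr_ge0.
rewrite leNgt; apply/negP => c0.
set t := Num.min del (- c / (q + 1)).
have q1 : 0 < q + 1 by lra.
have t0 : 0 < t by rewrite lt_min del0 /= divr_gt0 // oppr_gt0.
have tle : t <= del by rewrite ge_min lexx.
have H := Hmin (d + t *: e) (Hf t t0 tle).
rewrite dobj_expand -/c -/q in H.
have tq : t * (q + 1) <= - c.
  by rewrite -ler_pdivlMr // ge_min lexx orbT.
nra.
Qed.

Lemma mul_delta (h g : 'I_K) :
  (A *m (\col_k (k == h)%:R)) g ord0 = A g h.
Proof.
rewrite mxE (bigD1 h) //= big1 ?addr0 => [|k /negbTE kh]; rewrite !mxE ?eqxx ?kh /=.
  by rewrite mulr1.
by rewrite mulr0.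
Qed.

Lemma grad_eq0 s d h : is_dhat A u v s d -> 0 < d h ord0 ->
  \sum_g resid s d g * A g h = 0.
Proof.
move=> Hd dh0; have d0 := Hd.1.
apply/eqP; rewrite eq_le; apply/andP; split; last first.
  have := @grad_ge0 s d (\col_k (k == h)%:R) 1 Hd ltr01.
  under eq_bigr do rewrite mul_delta; apply => t t0 _ g.
  rewrite !mxE; have := d0 g; case: (g == h) => /=; lra.
have := @grad_ge0 s d (- \col_k (k == h)%:R) _ Hd dh0.
under eq_bigr do rewrite mulmxN mxE mul_delta mulrN.
rewrite sumrN oppr_ge0; apply => t t0 tle g.
rewrite !mxE; have := d0 g; case: (eqVneq g h) => [->|_] /=; lra.
Qed.

End Aux.



Section Aux2.
Variables (R : realType) (K : nat).

Lemma sel_sum (S : {set 'I_K}) (f : 'I_#|S| -> R) j :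
  \sum_k (enum_val k == enum_val j)%:R * f k = f j.
Proof.
rewrite (bigD1 j) //= eqxx mul1r big1 ?addr0 // => k kj.
by rewrite (inj_eq enum_val_inj) (negbTE kj) mul0r.
Qed.

Lemma vtilde_sel (A : 'M[R]_K) (S : {set 'I_K}) x j :
  vtilde A S x (enum_val j) = vtS A S x j ord0.
Proof. exact: sel_sum. Qed.

Lemma unit_row (A : 'M[R]_K) g : A \in unitmx -> exists k, A g k != 0.
Proof.
move=> Au; case/boolP: [exists k, A g k != 0] => [/existsP//|].
rewrite negb_exists => /forallP H.
have := mulmxV Au; move/matrixP => /(_ g g); rewrite !mxE eqxx /= big1 => [|k _].
  by move/eqP; rewrite eq_sym oner_eq0.
by have := H k; rewrite negbK => /eqP ->; rewrite mul0r.
Qed.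

Lemma gram_unit (A : 'M[R]_K) (S : {set 'I_K}) : A \in unitmx ->
  (colS A S)^T *m colS A S \in unitmx.
Proof.
move=> Au; rewrite -row_free_unit -kermx_eq0; apply/eqP/row_matrixP => i.
rewrite row0; set x := row i _.
have xG : x *m ((colS A S)^T *m colS A S) = 0 by apply/sub_kermxP; exact: row_sub.
clearbody x.
set w := colS A S *m x^T.
have ww : w^T *m w = 0 by rewrite /w trmx_mul trmxK mulmxA -(mulmxA x) xG mul0mx.
have w0 : w = 0.
  apply/matrixP => k j; rewrite (ord1 j) [RHS]mxE.
  move/matrixP: ww => /(_ ord0 ord0); rewrite [RHS]mxE mxE.
  under eq_bigr do rewrite mxE -expr2.
  move/eqP; rewrite psumr_eq0 => [/allP /(_ k (mem_index_enum k)) /= |k' _]; last exact: sqr_ge0.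
  by rewrite sqrf_eq0 => /eqP.
set y : 'cV[R]_K := \col_h \sum_j (enum_val j == h)%:R * x ord0 j.
have Ay : A *m y = w.
  apply/matrixP => k j; rewrite (ord1 j) !mxE.
  under eq_bigr do rewrite mxE mulr_sumr.
  rewrite exchange_big /=; apply: eq_bigr => j' _.
  rewrite !mxE (bigD1 (enum_val j')) //= eqxx mul1r big1 ?addr0 => [|h hj].
    by [].
  by rewrite eq_sym (negbTE hj) mul0r mulr0.
have y0 : y = 0 by rewrite -(mulKmx Au y) Ay w0 mulmx0.
apply/rowP => j; rewrite !mxE.
move/matrixP: y0 => /(_ (enum_val j) ord0); rewrite !mxE.
by rewrite (sel_sum S (fun k => x ord0 k)).
Qed.

End Aux2.



Section Aux3.
Variables (R : realType) (K : nat) (A : 'M[R]_K) (u v : 'cV[R]_K).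

Lemma Sset_mem (d : 'cV[R]_K) h : (h \in Sset d) = (d h ord0 != 0).
Proof. by rewrite inE /lam_of; case: eqP => _ /=; rewrite ?ltxx ?ltey. Qed.

Lemma dS_formula s d (S : {set 'I_K}) : 0 < s -> A \in unitmx ->
  is_dhat A u v s d -> (forall h, (h \in S) = (d h ord0 != 0)) ->
  forall j, d (enum_val j) ord0 =
     (s ^+ 2)^-1 * vtS A S u j ord0 - vtS A S v j ord0.
Proof.
move=> s0 Au Hd HS j.
have d0 := Hd.1.
pose C := colS A S.
pose dS : 'cV[R]_#|S| := \col_j d (enum_val j) ord0.
pose b := (s ^+ 2)^-1 *: u - v.
have Ad : A *m d = C *m dS.
  apply/matrixP => i k; rewrite (ord1 k) !mxE.
  rewrite (bigID (fun h => h \in S)) /= [X in _ + X]big1 ?addr0 => [|h hS]; last first.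
    by have := HS h; rewrite (negbTE hS) => /esym/negbFE/eqP ->; rewrite mulr0.
  rewrite big_enum_val; apply: eq_bigr => j' _; rewrite !mxE.
  by [].
have KKT : C^T *m (C *m dS - b) = 0.
  apply/matrixP => j' k; rewrite (ord1 k) -Ad [RHS]mxE.
  have dpos : 0 < d (enum_val j') ord0.
    by rewrite lt_def -HS enum_valP d0.
  rewrite -(@grad_eq0 _ _ A u v s d _ Hd dpos) mxE; apply: eq_bigr => i _.
  rewrite /resid /b !mxE; ring.
have G1 : (C^T *m C) *m dS = C^T *m b.
  by apply/eqP; rewrite -subr_eq0 -mulmxA -mulmxBr KKT.
have E : dS = (s ^+ 2)^-1 *: vtS A S u - vtS A S v.
  rewrite -(mulKmx (@gram_unit _ _ A S Au) dS) G1 /b mulmxBr -scalemxAr.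
  by rewrite mulmxBr -scalemxAr.
move/matrixP: E => /(_ j ord0); rewrite !mxE.
by [].
Qed.

End Aux3.



Lemma part1_core (R : realType) (K : nat) (A : 'M[R]_K) (u v : 'cV[R]_K) s d :
  (forall g h, 0 <= A g h) -> A \in unitmx -> 0 < s ->
  (forall g, u g ord0 / s ^+ 2 <= v g ord0) -> is_dhat A u v s d -> d = 0.
Proof.
move=> A0 Au s0 Hb [d0 Hmin].
have := Hmin 0 (fun g => ltac:(by rewrite mxE)).
rewrite /dobj mulmx0.
have Ad0 : forall g, 0 <= (A *m d) g ord0.
  by move=> g; rewrite mxE; apply: sumr_ge0 => h _; apply: mulr_ge0.
move=> H.
have H2 : \sum_g (A *m d) g ord0 ^+ 2 <= 0.
  apply: le_trans (_ : \sum_g (((A *m d) g ord0 - u g ord0 / s ^+ 2 + v g ord0) ^+ 2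
       - ((0 : 'cV[R]_K) g ord0 - u g ord0 / s ^+ 2 + v g ord0) ^+ 2) <= 0).
    apply: ler_sum => g _; rewrite [X in _ - (X - _ + _)^+2]mxE; have := Hb g; have := Ad0 g; nra.
  by rewrite sumrB subr_le0.
have Ad : A *m d = 0.
  apply/matrixP => g k; rewrite (ord1 k) [RHS]mxE.
  have : \sum_g (A *m d) g ord0 ^+ 2 == 0.
    by rewrite eq_le H2 /=; apply: sumr_ge0 => g' _; exact: sqr_ge0.
  rewrite psumr_eq0 => [/allP /(_ g (mem_index_enum g)) /= |g' _]; last exact: sqr_ge0.
  by rewrite sqrf_eq0 => /eqP.
by rewrite -(mulKmx Au d) Ad mulmx0.
Qed.

Lemma MN (R : realType) (n p : nat) (X : 'M[R]_(n, p)) lt : (0 < n)%N ->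
  Mmat X lt = (n%:R^-1 * Num.sqrt n%:R) *: (Nmat X lt *m X).
Proof.
move=> n0; have sq0 : Num.sqrt (n%:R : R) != 0.
  by rewrite gt_eqF // sqrtr_gt0 ltr0n.
rewrite /Mmat /Nmat -scalemxAl scalerA -mulmxA -scalemxAr.
by rewrite mulfK.
Qed.

Lemma v_pos (R : realType) (n p K : nat) (X : 'M[R]_(n, p)) (grp : 'I_p -> 'I_K) lt g :
  (0 < n)%N -> Amat grp X lt \in unitmx -> 0 < vvec grp X lt g ord0.
Proof.
move=> n0 Au.
have n0' : (0 : R) < n%:R by rewrite ltr0n.
have v0 : 0 <= vvec grp X lt g ord0.
  rewrite mxE divr_ge0 ?ler0n //; apply: sumr_ge0 => j _.
  by apply: sumr_ge0 => i _; exact: sqr_ge0.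
rewrite lt_def v0 andbT; apply/negP => /eqP Hv.
have [k] := @unit_row _ _ _ g Au; apply/negP; rewrite negbK.
move: Hv; rewrite !mxE => /eqP; rewrite mulf_eq0 invr_eq0 (gt_eqF n0') orbF.
rewrite psumr_eq0 => [/allP Hj|j _]; last first.
  by apply: sumr_ge0 => i _; exact: sqr_ge0.
rewrite mulf_eq0; apply/orP; left; apply/eqP.
apply: big1 => i gi; apply: big1 => j _.
have := Hj i (mem_index_enum i); rewrite gi /= psumr_eq0 => [/allP Hi|]; last first.
  by move=> ? _; exact: sqr_ge0.
rewrite MN // !mxE big1 ?mulr0 ?expr0n // => k' _.
have := Hi k' (mem_index_enum k'); rewrite /= sqrf_eq0 => /eqP ->.
by rewrite mul0r.
Qed.



Lemma part2_core (R : realType) (K : nat) (A : 'M[R]_K) (u v : 'cV[R]_K)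
  (dhat : R -> 'cV[R]_K) :
  (0 < K)%N -> (forall g h, 0 <= A g h) -> A \in unitmx ->
  (forall g, 0 < u g ord0) -> (forall g, 0 <= v g ord0) ->
  (forall s, 0 < s -> is_dhat A u v s (dhat s)) ->
  forall eps, 0 < eps -> exists2 del, 0 < del &
    forall s, 0 < s -> s < del -> exists g, eps^-1 < dhat s g ord0.
Proof.
move=> K0 A0 Au u0 v0 Hd eps eps0.
pose a i := \sum_h A i h.
have a0 : forall i, 0 <= a i by move=> i; apply: sumr_ge0.
pose P := \sum_i a i * u i ord0.
pose Q := \sum_i a i * v i ord0.
pose T := \sum_i a i ^+ 2.
have Q0 : 0 <= Q by apply: sumr_ge0 => i _; apply: mulr_ge0.
pose i0 : 'I_K := Ordinal K0.
have [k Ak] := @unit_row _ _ _ i0 Au.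
have ai0 : 0 < a i0.
  rewrite /a (bigD1 k) //= ltr_pwDl //; first by rewrite lt_def Ak A0.
  by apply: sumr_ge0.
have P0 : 0 < P.
  rewrite /P (bigD1 i0) //= ltr_pwDl //; first by apply: mulr_gt0.
  by apply: sumr_ge0 => i _; apply: mulr_ge0 => //; apply: ltW.
have T0 : 0 < T.
  rewrite /T (bigD1 i0) //= ltr_pwDl //; first by apply: exprn_gt0.
  by apply: sumr_ge0 => i _; apply: sqr_ge0.
pose c := eps^-1.
have c0 : 0 < c by rewrite invr_gt0.
pose D := Q + c * T + 1.
have D0 : 0 < D by rewrite /D; have := mulr_gt0 c0 T0; lra.
exists (Num.min 1 (P / D)); first by rewrite lt_min ltr01 divr_gt0.
move=> s s0; rewrite lt_min => /andP[s1 sPD].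
case/boolP: [exists g, c < dhat s g ord0] => [/existsP//|].
rewrite negb_exists => /forallP Hall; exfalso.
have dle : forall g, dhat s g ord0 <= c.
  by move=> g; have := Hall g; rewrite -leNgt.
have [d0 _] := Hd s s0.
have G := @grad_ge0 _ _ A u v s (dhat s) (const_mx 1 : 'cV[R]_K) 1 (Hd s s0) ltr01.
have Ae : forall i, (A *m (const_mx 1 : 'cV[R]_K)) i ord0 = a i.
  by move=> i; rewrite !mxE; apply: eq_bigr => h _; rewrite ?mxE mulr1.
have H1 : forall t, 0 < t -> t <= 1 -> forall g,
    0 <= (dhat s + t *: (const_mx 1 : 'cV[R]_K)) g ord0.
  by move=> t t0 _ g; rewrite !mxE; have := d0 g; lra.
have {G} G : 0 <= \sum_i @resid _ _ A u v s (dhat s) i * a i.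
  by have := G H1; under eq_bigr do rewrite Ae.
have Hs : (s ^+ 2)^-1 * P <= \sum_i (A *m dhat s) i ord0 * a i + Q.
  move: G; rewrite /resid /P /Q mulr_sumr.
  have -> : \sum_i ((A *m dhat s) i ord0 - u i ord0 / s ^+ 2 + v i ord0) * a i
     = \sum_i (A *m dhat s) i ord0 * a i - \sum_i (s ^+ 2)^-1 * (a i * u i ord0)
       + \sum_i a i * v i ord0.
    by rewrite -sumrB -big_split /=; apply: eq_bigr => i _; ring.
  lra.
have Hup : \sum_i (A *m dhat s) i ord0 * a i <= c * T.
  rewrite /T mulr_sumr; apply: ler_sum => i _.
  have : (A *m dhat s) i ord0 <= c * a i.
    rewrite mxE /a mulr_sumr; apply: ler_sum => h _.
    by rewrite mulrC; apply: ler_wpM2r.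
  have := a0 i; nra.
have w0 : 0 < s ^+ 2 by apply: exprn_gt0.
have ww : s ^+ 2 * (s ^+ 2)^-1 = 1 by rewrite mulfV // gt_eqF.
have sl : s ^+ 2 <= s by rewrite expr2; nra.
have sD : s * D < P by rewrite -ltr_pdivlMr.
have : s ^+ 2 * D < P by nra.
rewrite /D.
move: Hs Hup ww w0; set w := s ^+ 2; set wi := w^-1; set Sm := \sum_i _.
move=> Hs Hup ww w0.
have HP : P <= w * (Sm + Q).
  by rewrite -[P]mul1r -ww -mulrA ler_wpM2l // ltW.
have HS : w * Sm <= w * (c * T) by rewrite ler_wpM2l // ltW.
nra.
Qed.



Lemma lim_helper (R : realType) (f : R -> \bar R) :
  (forall e, 0 < e -> exists2 del, 0 < del &
     forall s, 0 < s -> s < del -> (0 <= f s <= e%:E)%E) ->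
  f @ 0^'+ --> 0%:E.
Proof.
move=> H; apply/fine_cvgP; split.
  have [del d0 Hd] := H 1 ltr01.
  near=> s.
  have s0 : 0 < s by near: s; exact: nbhs_right_gt.
  have sd : s < del by near: s; exact: nbhs_right_lt.
  have /andP[h1 h2] := Hd s s0 sd.
  rewrite fin_numElt; apply/andP; split.
    exact: lt_le_trans (ltNyr 0) h1.
  exact: le_lt_trans h2 (ltry 1).
apply/cvgr0Pnorm_le => e e0.
have [del d0 Hd] := H e e0.
near=> s.
have s0 : 0 < s by near: s; exact: nbhs_right_gt.
have sd : s < del by near: s; exact: nbhs_right_lt.
have /andP[] := Hd s s0 sd.
rewrite /=; case: (f s) => [x||] //=; rewrite ?lee_fin => h1 h2.
by rewrite ger0_norm.
Unshelve. all: end_near.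
Qed.



Theorem proposition1 (R : realType) (n p K : nat)
  (X : 'M[R]_(n, p)) (Y : 'cV[R]_n) (grp : 'I_p -> 'I_K) (lt : R)
  (dhat : R -> 'cV[R]_K) :
  (0 < n)%N -> (0 < K)%N -> 0 < lt ->
  let A := Amat grp X lt in
  let u := uvec grp X Y lt in
  let v := vvec grp X lt in
  (forall s, 0 < s -> is_dhat A u v s (dhat s)) ->
  A \in unitmx ->
  (forall g, 0 < u g ord0) ->
  (* 1. *)
  (forall s, 0 < s -> (forall g, u g ord0 / v g ord0 <= s ^+ 2) ->
     (forall g, lam_of (dhat s) g = +oo%E) /\
     (forall w, is_group_ridge grp X Y (lam_of (dhat s)) w -> w = 0)) /\
  (* 2. *)
  ((fun s => \big[Order.min/+oo%E]_(g < K) lam_of (dhat s) g)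
      @ 0^'+ --> 0%:E) /\
  (* 3. *)
  (forall s1 s2, 0 < s1 -> 0 < s2 -> Sset (dhat s1) = Sset (dhat s2) ->
     forall g, g \in Sset (dhat s1) ->
       lam_of (dhat s1) g =
         ((s2 ^+ 2 / s1 ^+ 2) * (fine (lam_of (dhat s2) g))^-1
          + (s2 ^+ 2 / s1 ^+ 2 - 1) * vtilde A (Sset (dhat s1)) v g)^-1%:E).
Proof.
move=> n0 K0 lt0 A u v Hd Au u0.
have n0' : (0 : R) < n%:R by rewrite ltr0n.
have A0 : forall g h, 0 <= A g h.
  move=> g h; rewrite /A /Amat mxE divr_ge0 ?ler0n //.
  by apply: sumr_ge0 => i _; apply: sumr_ge0 => j _; exact: sqr_ge0.
have vpos : forall g, 0 < v g ord0 by move=> g; exact: (@v_pos _ n p K X grp lt g n0 Au).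
split.
  move=> s s0 Hs.
  have w0 : 0 < s ^+ 2 by apply: exprn_gt0.
  have Hb : forall g, u g ord0 / s ^+ 2 <= v g ord0.
    move=> g; have := Hs g; rewrite ler_pdivrMr // => H.
    by rewrite ler_pdivrMr // mulrC.
  have d0 := @part1_core _ _ A u v s (dhat s) A0 Au s0 Hb (Hd s s0).
  have Hl : forall g, lam_of (dhat s) g = +oo%E.
    by move=> g; rewrite /lam_of d0 mxE eqxx.
  split => // w [Hf _].
  by apply/matrixP => j k; rewrite (ord1 k) [RHS]mxE; apply: Hf; rewrite Hl.
split.
  apply: lim_helper => e e0.
  have v0 : forall g, 0 <= v g ord0 by move=> g; apply: ltW.
  have [del del0 Hdel] := @part2_core _ _ A u v dhat K0 A0 Au u0 v0 Hd e e0.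
  exists del => // s s0 sd.
  have [g Hg] := Hdel s s0 sd.
  have [d0 _] := Hd s s0.
  apply/andP; split.
    apply: le_bigmin => [|i _]; first exact: leey.
    rewrite /lam_of; case: ifP => _; first exact: leey.
    by rewrite lee_fin invr_ge0.
  apply/bigmin_leP; right; exists g => //.
  have dg : 0 < dhat s g ord0 by apply: lt_trans Hg; rewrite invr_gt0.
  rewrite /lam_of (gt_eqF dg) lee_fin.
  by rewrite -[e]invrK lef_pV2 ?posrE ?invr_gt0 // ltW.
move=> s1 s2 s10 s20 HS g gS.
set S := Sset (dhat s1).
have HS1 : forall h, (h \in S) = (dhat s1 h ord0 != 0) by move=> h; exact: (@Sset_mem _ _ (dhat s1) h).
have HS2 : forall h, (h \in S) = (dhat s2 h ord0 != 0) by move=> h; rewrite /S HS (@Sset_mem _ _ (dhat s2) h).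
set j := enum_rank_in gS g.
have ej : enum_val j = g by rewrite /j enum_rankK_in.
have E1 := @dS_formula _ _ A u v s1 (dhat s1) S s10 Au (Hd s1 s10) HS1 j.
have E2 := @dS_formula _ _ A u v s2 (dhat s2) S s20 Au (Hd s2 s20) HS2 j.
have Vt := @vtilde_sel _ _ A S v j.
rewrite ej in E1 E2 Vt.
have n1 : dhat s1 g ord0 != 0 by rewrite -HS1.
have n2 : dhat s2 g ord0 != 0 by rewrite -HS2.
rewrite /lam_of (negbTE n1) (negbTE n2) /= invrK Vt E1 E2.
have s1n : s1 != 0 by rewrite gt_eqF.
have s2n : s2 != 0 by rewrite gt_eqF.
congr ((_)^-1%:E); field.
by rewrite s1n s2n.
Qed.
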